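(* Let $d,N,p\in\mathbb{N}$ and let $X_1,\ldots,X_N$ be independent, uniformly distributed random points in $[0,1)^d$, with $X_j=(X_{j,1},\ldots,X_{j,d})$. For $i\in\{1,\ldots,d\}$ and $j\in\{1,\ldots,N\}$ let $X_{j,i}^{(p)}=\lfloor 2^pX_{j,i}\rfloor/2^p\in\{0,1/2^p,\ldots,(2^p-1)/2^p\}$ and $X_j^{(p)}=(X_{j,1}^{(p)},\ldots,X_{j,d}^{(p)})$. Write each $X_{j,i}^{(p)}$ in binary with $p$ digits and concatenate the corresponding $dN$ binary words (in the order $X_{1,1}^{(p)},\ldots,X_{1,d}^{(p)},X_{2,1}^{(p)},\ldots,X_{N,d}^{(p)}$) to obtain a binary word $U_m$ of length $m=pdN$. Let $\mathcal{P}=\{X_1,\ldots,X_N\}$. Then: 1. $\mathcal{P}(U_m)=\{X_1^{(p)},\ldots,X_N^{(p)}\}$; 2. $U_m$ is uniformly distributed in $\{0,1\}^m$; 3. $|D_N^{\ast}(\mathcal{P})-D_N^{\ast}(\mathcal{P}(U_m))|\le d/2^p$; 4. for every $C>0$, $$\mathbb{P}\left[D_N^{\ast}(\mathcal{P}(U_m))\ge C\sqrt{\frac{d}{N}}\right]\le\mathbb{P}\left[D_N^{\ast}(\mathcal{P})\ge C\sqrt{\frac{d}{N}}-\frac{d}{2^p}\right].$$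
   Context: For an $N$-element point set $\mathcal{Q}=\{\boldsymbol{x}_1,\ldots,\boldsymbol{x}_N\}\subset[0,1)^d$, the star-discrepancy is $D_N^{\ast}(\mathcal{Q})=\sup_{\boldsymbol{t}\in[0,1]^d}\left|\frac{\#\{k:\boldsymbol{x}_k\in[\boldsymbol{0},\boldsymbol{t})\}}{N}-\mathrm{volume}([\boldsymbol{0},\boldsymbol{t}))\right|$, where $[\boldsymbol{0},\boldsymbol{t})=[0,t_1)\times\cdots\times[0,t_d)$. Conversion of a binary word of length $m=pdN$ to a point set $\mathcal{P}(\cdot)$: split the word into $dN$ consecutive blocks of $p$ bits; a block $d_1d_2\ldots d_p$ yields the coordinate $\sum_{i=1}^p d_i2^{-i}$; consecutive groups of $d$ such coordinates form the $N$ points of $[0,1)^d$. *)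

(* Defs.v *)
From HB Require Import structures.
From mathcomp Require Import all_boot all_order all_algebra.
From mathcomp Require Import all_classical all_reals all_analysis.
Set Implicit Arguments. Unset Strict Implicit. Unset Printing Implicit Defensive.
Import Order.TTheory GRing.Theory Num.Theory.
Import numFieldNormedType.Exports.
Local Open Scope classical_set_scope.
Local Open Scope ring_scope.

Definition count_box (R : realType) (d N : nat) (x : 'I_N -> 'I_d -> R)
  (t : 'I_d -> R) : nat :=
  #|[set k : 'I_N | [forall i, (0 <= x k i) && (x k i < t i)]]|.

Definition star_discrepancy (R : realType) (d N : nat)
  (x : 'I_N -> 'I_d -> R) : R :=
  sup [set r : R | exists t : 'I_d -> R, (forall i, 0 <= t i <= 1) /\
        r = `| (count_box x t)%:R / N%:R - \prod_(i < d) t i |].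

Definition quantize (R : realType) (p : nat) (x : R) : R :=
  (Num.floor (2%:R ^+ p * x))%:~R / 2%:R ^+ p.

(* the point set P(w) of a binary word w: blocks of p bits, d coordinates
   per point, point j has coordinate i given by block number d*j+i *)
Definition word_to_points (R : realType) (p d N : nat) (w : seq bool) :
  'I_N -> 'I_d -> R :=
  fun j i => \sum_(k < p) (nth false w (p * (d * j + i) + k))%:R / 2%:R ^+ k.+1.

Arguments word_to_points R p d N w _ _ : clear implicits.

(* the p-digit binary expansion of n (most significant digit first) *)
Definition bits (p n : nat) : seq bool :=
  [seq odd (n %/ 2 ^ (p - k.+1)) | k <- iota 0 p].

Definition binary_word (R : realType) (p d N : nat) (x : 'I_N -> 'I_d -> R) :
  seq bool :=
  flatten [seq flatten [seq bits p (Num.truncn (2%:R ^+ p * x j i))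
                        | i <- enum 'I_d] | j <- enum 'I_N].

(* Y = (Y_0,...,Y_{d-1}) is a random vector uniformly distributed on [0,1)^d:
   measurable coordinates, and its law is Lebesgue measure restricted to
   [0,1)^d (checked on products of Borel sets, which generate the Borel sets) *)
Definition uniform_on_unit_cube (dT : measure_display) (T : measurableType dT)
  (R : realType) (P : probability T R) (d : nat) (Y : 'I_d -> T -> R) : Prop :=
  (forall i, measurable_fun setT (Y i)) /\
  forall B : 'I_d -> set R, (forall i, measurable (B i)) ->
    P [set t | forall i, B i (Y i t)] =
    (\prod_(i < d) (@lebesgue_measure R) (B i `&` `[0%R, 1%R[))%E.

(* mutual independence of the random vectors X_0,...,X_{N-1} (each in R^d):
   product rule on the generating pi-systems of product Borel events
   (taking B j = setT gives every subfamily) *)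
Definition independent_vectors (dT : measure_display) (T : measurableType dT)
  (R : realType) (P : probability T R) (N d : nat)
  (X : 'I_N -> 'I_d -> T -> R) : Prop :=
  forall B : 'I_N -> 'I_d -> set R, (forall j i, measurable (B j i)) ->
    P [set t | forall j i, B j i (X j i t)] =
    (\prod_(j < N) P [set t | forall i, B j i (X j i t)])%E.

(* Main.v *)
Require Import Defs.
From HB Require Import structures.
From mathcomp Require Import all_boot all_order all_algebra.
From mathcomp Require Import all_classical all_reals all_analysis.
From mathcomp Require Import zify ring lra.
Import Order.TTheory GRing.Theory Num.Theory.
Import numFieldNormedType.Exports.
Local Open Scope classical_set_scope.
Local Open Scope ring_scope.
Section NatPart. Local Open Scope nat_scope.
Lemma bin_sumS p (b : nat -> bool) :
  (\sum_(e < p.+1) b e * 2 ^ e = b 0%N + 2 * \sum_(e < p) b e.+1 * 2 ^ e)%N.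
Proof.
rewrite big_ord_recl /= expn0 muln1; congr (_ + _)%N.

rewrite big_distrr /=; apply: eq_bigr => e _; rewrite /bump leq0n add1n expnS mulnCA //.
Qed.

Lemma bin_sum_lt p (b : nat -> bool) : (\sum_(e < p) b e * 2 ^ e < 2 ^ p)%N.
Proof.
elim: p b => [|p IH] b; first by rewrite big_ord0.
rewrite bin_sumS expnS; have /= := IH (fun e => b e.+1).
set S := (\sum_(e < p) _)%N; move=> HS; case: (b 0%N) => /=. all: lia.
Qed.

Lemma bin_sum_odd p (b : nat -> bool) f : (f < p)%N ->
  odd ((\sum_(e < p) b e * 2 ^ e) %/ 2 ^ f) = b f.
Proof.
elim: p b f => [|p IH] b f //; rewrite bin_sumS.
case: f => [|f] Hf.
  by rewrite expn0 divn1 oddD mul2n odd_double addbF; case: (b 0%N).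
rewrite expnS divnMA.
have -> : ((b 0%N + 2 * \sum_(e < p) b e.+1 * 2 ^ e) %/ 2 = \sum_(e < p) b e.+1 * 2 ^ e)%N.
  by set S := (\sum_(e < p) _)%N; case: (b 0%N) => /=; lia.
by rewrite (IH (fun e => b e.+1)).
Qed.

Lemma bin_sum_id p n : (n < 2 ^ p)%N -> (\sum_(e < p) odd (n %/ 2 ^ e) * 2 ^ e)%N = n.
Proof.
elim: p n => [|p IH] n Hn.
  by rewrite big_ord0; move: Hn; rewrite expn0; lia.
rewrite (bin_sumS p (fun e => odd (n %/ 2 ^ e))) /= expn0 divn1.
have -> : (\sum_(e < p) odd (n %/ 2 ^ e.+1) * 2 ^ e = \sum_(e < p) odd (n./2 %/ 2 ^ e) * 2 ^ e)%N.
  by apply: eq_bigr => e _; rewrite expnS divnMA divn2.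
rewrite IH; last by move: Hn; rewrite expnS -divn2; move=> H; rewrite ltn_divLR // mulnC.
by rewrite -divn2 {3}(divn_eq n 2) modn2; case: (odd n) => /=; lia.
Qed.

Lemma size_bits p n : size (bits p n) = p.
Proof. by rewrite /bits size_map size_iota. Qed.

Lemma nth_bits p n k : (k < p)%N -> nth false (bits p n) k = odd (n %/ 2 ^ (p - k.+1)).
Proof. by move=> Hk; rewrite /bits (nth_map 0%N) ?size_iota // nth_iota. Qed.

Lemma nth_flatten_const {T : Type} (x0 : T) (s : nat) (ss : seq (seq T)) a b :
  all (fun l => size l == s) ss -> (a < size ss)%N -> (b < s)%N ->
  nth x0 (flatten ss) (s * a + b) = nth x0 (nth [::] ss a) b.
Proof.
elim: ss a => [|l ss IH] a //= /andP[/eqP Hl Hall] Ha Hb.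
rewrite nth_cat Hl; case: a Ha => [|a] Ha.
  by rewrite muln0 add0n Hb.
have -> : (s * a.+1 + b < s)%N = false by nia.
by rewrite mulnS -addnA addKn IH.
Qed.

Lemma size_flatten_const {T : Type} (s : nat) (ss : seq (seq T)) :
  all (fun l => size l == s) ss -> size (flatten ss) = (s * size ss)%N.
Proof.
elim: ss => [|l ss IH] /=; first by rewrite muln0.
by move=> /andP[/eqP Hl /IH IHs]; rewrite size_cat Hl IHs mulnS.
Qed.
End NatPart.
Section Helpers.
Context {R : realType}.

Lemma all_size_bits p (s : seq nat) : all (fun l => size l == p) [seq bits p n | n <- s].
Proof. by rewrite all_map; apply/allP => n _ /=; rewrite size_bits. Qed.

Lemma all_rows p d N (x : 'I_N -> 'I_d -> R) :
  all (fun l => size l == (d * p)%N)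
    [seq flatten [seq bits p (Num.truncn (2%:R ^+ p * x j i)) | i <- enum 'I_d] | j <- enum 'I_N].
Proof.
rewrite all_map; apply/allP => j _ /=.
rewrite (size_flatten_const p).
  by rewrite size_map size_enum_ord mulnC.
by rewrite all_map; apply/allP => i _ /=; rewrite size_bits.
Qed.

Lemma size_binary_word p d N (x : 'I_N -> 'I_d -> R) :
  size (binary_word p x) = (p * d * N)%N.
Proof.
rewrite /binary_word (size_flatten_const (d * p)%N) ?all_rows //.
by rewrite size_map size_enum_ord (mulnC d).
Qed.

Lemma nth_binary_word p d N (x : 'I_N -> 'I_d -> R) (j : 'I_N) (i : 'I_d) k :
  (k < p)%N -> nth false (binary_word p x) (p * (d * j + i) + k) =
  nth false (bits p (Num.truncn (2%:R ^+ p * x j i))) k.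
Proof.
move=> Hk.
have -> : (p * (d * j + i) + k = (d * p) * j + (p * i + k))%N.
  by ring.
rewrite /binary_word nth_flatten_const ?all_rows //; first last.
- have := ltn_ord i; nia.
- by rewrite size_map size_enum_ord.
rewrite (nth_map j) ?size_enum_ord // nth_ord_enum.
rewrite nth_flatten_const //; last by rewrite size_map size_enum_ord.
  by rewrite (nth_map i) ?size_enum_ord // nth_ord_enum.
by rewrite all_map; apply/allP => i' _ /=; rewrite size_bits.
Qed.

End Helpers.
Section Part1.
Context {R : realType}.

Lemma two_neq0 : (2%:R : R) != 0. Proof. by rewrite pnatr_eq0. Qed.
Lemma two_gt0 : (0 : R) < 2%:R. Proof. by rewrite ltr0n. Qed.
Lemma twoX_gt0 p : (0 : R) < 2%:R ^+ p. Proof. by rewrite exprn_gt0 // two_gt0. Qed.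
Lemma twoX_neq0 p : (2%:R : R) ^+ p != 0. Proof. by rewrite gt_eqF // twoX_gt0. Qed.

Lemma floor_nat (y : R) : 0 <= y -> Num.floor y = (Num.truncn y)%:Z.
Proof.
move=> y0; apply: floor_def; have := truncn_itv y0.
by rewrite -natr1 intrD.
Qed.

Lemma truncn_lt_pow p (x : R) : 0 <= x < 1 -> (Num.truncn (2%:R ^+ p * x) < 2 ^ p)%N.
Proof.
move=> /andP[x0 x1].
rewrite truncn_lt_nat ?mulr_ge0 ?exprn_ge0 ?ler0n // natrX.
by rewrite -ltr_pdivlMl ?twoX_gt0 // mulVf ?twoX_neq0.
Qed.

Lemma bits_sum_real p n : (n < 2 ^ p)%N ->
  \sum_(k < p) (odd (n %/ 2 ^ (p - k.+1)))%:R / (2%:R : R) ^+ k.+1 = n%:R / 2%:R ^+ p.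
Proof.
move=> Hn.
rewrite -{2}(@bin_sum_id p n Hn) natr_sum mulr_suml.
rewrite (reindex_inj rev_ord_inj) /=.
apply: eq_bigr => e _.
have He := ltn_ord e.
have -> : (p - (p - e.+1).+1 = e)%N by lia.
have -> : ((p - e.+1).+1 = p - e)%N by lia.
rewrite natrM natrX.
have -> : (2%:R : R) ^+ p = 2%:R ^+ e * 2%:R ^+ (p - e) by rewrite -exprD subnKC // ltnW.
field.
by rewrite !twoX_neq0.
Qed.

Lemma part1_lem p d N (x : 'I_N -> 'I_d -> R) : (forall j i, 0 <= x j i < 1) ->
  word_to_points R p d N (binary_word p x) = (fun j i => quantize p (x j i)).
Proof.
move=> Hx; apply/funext => j; apply/funext => i.
rewrite /word_to_points /quantize.
have Hxi := Hx j i; case/andP: (Hx j i) => x0 x1.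
have y0 : 0 <= (2%:R : R) ^+ p * x j i by rewrite mulr_ge0 ?exprn_ge0 ?ler0n.
rewrite floor_nat // -bits_sum_real; last exact: truncn_lt_pow.
apply: eq_bigr => k _.
by rewrite nth_binary_word // nth_bits.
Qed.

End Part1.
Section Part2.
Context {R : realType}.

Definition nw p d (w : seq bool) (j i : nat) : nat :=
  (\sum_(e < p) nth false w (p * (d * j + i) + (p - e.+1)) * 2 ^ e)%N.

Lemma nw_lt p d w j i : (nw p d w j i < 2 ^ p)%N.
Proof. exact: (bin_sum_lt p (fun e => nth false w (p * (d * j + i) + (p - e.+1)))). Qed.

Lemma block_eq p d w j i n : (n < 2 ^ p)%N ->
  (forall k, (k < p)%N -> nth false (bits p n) k = nth false w (p * (d * j + i) + k))
  <-> n = nw p d w j i.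
Proof.
move=> Hn; split.
- move=> H; rewrite -{1}(@bin_sum_id p n Hn) /nw.
  apply: eq_bigr => e _; have He := ltn_ord e.
  rewrite -H; last by lia.
  rewrite nth_bits; last by lia.
  by have -> : (p - (p - e.+1).+1 = e)%N by lia.
- move=> -> k Hk; rewrite nth_bits // /nw.
  rewrite (bin_sum_odd p (fun e => nth false w (p * (d * j + i) + (p - e.+1)))); last by lia.
  by have -> : (p - (p - k.+1).+1 = k)%N by lia.
Qed.

Lemma U_eq_w p d N (x : 'I_N -> 'I_d -> R) (w : seq bool) :
  (forall j i, 0 <= x j i < 1) -> size w = (p * d * N)%N ->
  (binary_word p x = w <-> forall j i, Num.truncn (2%:R ^+ p * x j i) = nw p d w j i).
Proof.
move=> Hx Hw; split.
- move=> <- j i; apply: (proj1 (block_eq p d _ j i _ (truncn_lt_pow p _ (Hx j i)))) => k Hk.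
  by rewrite nth_binary_word.
- move=> H; apply: (@eq_from_nth _ false); first by rewrite size_binary_word Hw.
  rewrite size_binary_word => q Hq.
  have p0 : (0 < p)%N by case: p Hq {Hw H} => //; rewrite !mul0n.
  have d0 : (0 < d)%N by case: d Hq {Hw H x Hx} => //; rewrite muln0 mul0n.
  have Hk : (q %% p < p)%N by rewrite ltn_mod.
  have Hi : ((q %/ p) %% d < d)%N by rewrite ltn_mod.
  have Hj : ((q %/ p) %/ d < N)%N.
    by rewrite ltn_divLR // ltn_divLR //; have -> : (N * d * p = p * d * N)%N by ring.
  have Eq : q = (p * (d * (q %/ p %/ d) + (q %/ p %% d)) + q %% p)%N.
    by rewrite (mulnC d) -divn_eq mulnC -divn_eq.
  rewrite Eq.
  have := @nth_binary_word R p d N x (Ordinal Hj) (Ordinal Hi) _ Hk; rewrite /= => ->.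
  by apply: (proj2 (block_eq p d w _ _ _ (truncn_lt_pow p _ (Hx (Ordinal Hj) (Ordinal Hi))))) => //; exact: (H (Ordinal Hj) (Ordinal Hi)).
Qed.

Lemma truncn_dyadic p (y : R) n : 0 <= y ->
  (Num.truncn (2%:R ^+ p * y) = n) <-> `[n%:R / 2%:R ^+ p, n.+1%:R / 2%:R ^+ p[%classic y.
Proof.
move=> y0; rewrite /= in_itv /=.
rewrite ler_pdivrMr ?twoX_gt0 // ltr_pdivlMr ?twoX_gt0 // ![y * _]mulrC.
rewrite -truncn_eq ?mulr_ge0 ?exprn_ge0 ?ler0n //.
by split => [->|/eqP].
Qed.

Lemma leb_dyadic p n : (n < 2 ^ p)%N ->
  (@lebesgue_measure R) (`[n%:R / 2%:R ^+ p, n.+1%:R / 2%:R ^+ p[%classic `&` `[0%R, 1%R[%classic)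
  = ((2%:R ^+ p)^-1)%:E.
Proof.
move=> Hn.
rewrite setIidl; last first.
  move=> y /=; rewrite !in_itv /= => /andP[h1 h2]; apply/andP; split.
    by apply: le_trans h1; rewrite divr_ge0 ?ler0n ?exprn_ge0.
  apply: (lt_le_trans h2); rewrite ler_pdivrMr ?twoX_gt0 // mul1r -natrX ler_nat //.
rewrite lebesgue_measure_itv /= lte_fin ltr_pM2r ?invr_gt0 ?twoX_gt0 // ltr_nat ltnSn.
by rewrite -EFinD -mulrBl -natrB // subSnn mul1r.
Qed.

End Part2.
Section Part2b.
Context {R : realType} {dT : measure_display} {T : measurableType dT}.

Lemma part2_lem (P : probability T R) (d N p : nat) (X : 'I_N -> 'I_d -> T -> R) :
  (forall j, uniform_on_unit_cube P (X j)) ->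
  independent_vectors P X ->
  (forall j i t, 0 <= X j i t < 1) ->
  forall w : seq bool, size w = (p * d * N)%N ->
    P [set t | binary_word p (fun j i => X j i t) = w] = ((2%:R ^+ (p * d * N))^-1)%:E.
Proof.
move=> Hu Hind Hx w Hw.
pose B := fun (j : 'I_N) (i : 'I_d) =>
  `[(nw p d w j i)%:R / (2%:R : R) ^+ p, (nw p d w j i).+1%:R / 2%:R ^+ p[%classic.
have -> : [set t | binary_word p (fun j i => X j i t) = w] = [set t | forall j i, B j i (X j i t)].
  apply/seteqP; split => t /=.
    move=> /(U_eq_w p d N _ w (fun j i => Hx j i t) Hw) H j i.
    by apply/(truncn_dyadic p _ _ (proj1 (andP (Hx j i t)))); exact: H.
  move=> H; apply/(U_eq_w p d N _ w (fun j i => Hx j i t) Hw) => j i.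
  by apply/(truncn_dyadic p _ _ (proj1 (andP (Hx j i t)))); exact: H.
rewrite Hind; last by move=> j i; exact: measurable_itv.
under eq_bigr => j _.
  rewrite (proj2 (Hu j) (B j)); last by move=> i; exact: measurable_itv.
  under eq_bigr => i _ do rewrite leb_dyadic ?nw_lt //.
  over.
rewrite /= !prodEFin; congr (_%:E).
by rewrite !prodr_const !card_ord -exprM exprVn -exprM mulnA.

Qed.

End Part2b.
Section Part3.
Set Implicit Arguments. Unset Strict Implicit.
Context {R : realType}.

Definition fdisc d N (x : 'I_N -> 'I_d -> R) (t : 'I_d -> R) : R :=
  `| (count_box x t)%:R / N%:R - \prod_(i < d) t i |.

Definition inbox d (t : 'I_d -> R) := forall i, 0 <= t i <= 1.
Arguments inbox {d}.
Arguments fdisc {d N}.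

Lemma count_le_N d N (x : 'I_N -> 'I_d -> R) t : (count_box x t <= N)%N.
Proof. by rewrite /count_box -[X in (_ <= X)%N](card_ord N) max_card. Qed.

Lemma cnt01 d N (x : 'I_N -> 'I_d -> R) t :
  (0 <= (count_box x t)%:R / N%:R :> R) && ((count_box x t)%:R / N%:R <= 1 :> R).
Proof.
apply/andP; split; first by rewrite divr_ge0 ?ler0n.
case: N x t => [|N] x t; first by rewrite invr0 mulr0.
by rewrite ler_pdivrMr ?ltr0n // mul1r ler_nat count_le_N.
Qed.

Lemma prod01 d (t : 'I_d -> R) : inbox t -> 0 <= \prod_(i < d) t i <= 1.
Proof.
move=> Ht; apply/andP; split; first by apply: prodr_ge0 => i _; case/andP: (Ht i).
by apply: prodr_ile1 => i _; exact: Ht.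
Qed.

Lemma fdisc_le1 d N (x : 'I_N -> 'I_d -> R) t : inbox t -> fdisc x t <= 1.
Proof.
move=> Ht; rewrite /fdisc ler_norml.
have := cnt01 x t; have := prod01 Ht.
set a := (_ / _); set b := \prod_(i < d) _ => /andP[? ?] /andP[? ?].
apply/andP; split; lra.
Qed.

Lemma sd_eq d N (x : 'I_N -> 'I_d -> R) :
  star_discrepancy x = sup [set r | exists t, inbox t /\ r = fdisc x t].
Proof. by []. Qed.

Lemma sd_ne d N (x : 'I_N -> 'I_d -> R) :
  [set r | exists t, inbox t /\ r = fdisc x t] !=set0.
Proof.
exists (fdisc x (fun=> 0)); exists (fun=> 0); split => // i.
by rewrite lexx ler01.
Qed.

Lemma sd_hassup d N (x : 'I_N -> 'I_d -> R) :
  has_sup [set r | exists t, inbox t /\ r = fdisc x t].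
Proof.
split; first exact: sd_ne.
by exists 1 => r [t [Ht ->]]; exact: fdisc_le1.
Qed.

Lemma fdisc_le_sd d N (x : 'I_N -> 'I_d -> R) t : inbox t -> fdisc x t <= star_discrepancy x.
Proof.
move=> Ht; rewrite sd_eq; apply: (sup_upper_bound (sd_hassup x)).
by exists t.
Qed.

Lemma sd_le d N (x : 'I_N -> 'I_d -> R) M :
  (forall t, inbox t -> fdisc x t <= M) -> star_discrepancy x <= M.
Proof.
move=> H; rewrite sd_eq; apply: ge_sup; first exact: sd_ne.
by move=> r [t [Ht ->]]; exact: H.
Qed.

Lemma sd_close d N (x y : 'I_N -> 'I_d -> R) c :
  (forall t, inbox t -> fdisc x t <= star_discrepancy y + c) ->
  (forall t, inbox t -> fdisc y t <= star_discrepancy x + c) ->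
  `| star_discrepancy x - star_discrepancy y | <= c.
Proof.
move=> H1 H2; have := sd_le H1; have := sd_le H2.
rewrite ler_norml => ? ?; apply/andP; split; lra.
Qed.

Lemma count_mono d N (x : 'I_N -> 'I_d -> R) t u :
  (forall i, t i <= u i) -> (count_box x t <= count_box x u)%N.
Proof.
move=> Htu; rewrite /count_box; apply/subset_leq_card/fintype.subsetP => k; rewrite !inE.
move/forallP => H; apply/forallP => i; have /andP[h1 h2] := H i.
by rewrite h1 /= (lt_le_trans h2).
Qed.

Lemma cnt_mono d N (x : 'I_N -> 'I_d -> R) t u :
  (forall i, t i <= u i) -> (count_box x t)%:R / N%:R <= (count_box x u)%:R / N%:R :> R.
Proof.
move=> H; apply: ler_wpM2r; first by rewrite invr_ge0 ler0n.
by rewrite ler_nat count_mono.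
Qed.

Lemma prod_diff d (a b : 'I_d -> R) e :
  (forall i, 0 <= a i <= b i) -> (forall i, b i <= 1) -> (forall i, b i - a i <= e) ->
  \prod_(i < d) b i - \prod_(i < d) a i <= d%:R * e.
Proof.
elim: d a b => [|d IH] a b Hab Hb1 He.
  by rewrite !big_ord0 subrr mul0r.
rewrite !big_ord_recr /=.
have IH' := IH (fun i => a (widen_ord (leqnSn d) i)) (fun i => b (widen_ord (leqnSn d) i))
  (fun i => Hab _) (fun i => Hb1 _) (fun i => He _).
set A := \prod_(i < d) a _ in IH' *; set B := \prod_(i < d) b _ in IH' *.
have hA : 0 <= A by apply: prodr_ge0 => i _; case/andP: (Hab (widen_ord (leqnSn d) i)).
have hB : B <= 1 by apply: prodr_ile1 => i _; rewrite Hb1 andbT;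
  case/andP: (Hab (widen_ord (leqnSn d) i)) => h1 h2; exact: le_trans h2.
have hAB : A <= B by apply: ler_prod => i _; exact: Hab.
have := Hab ord_max; have := Hb1 ord_max; have := He ord_max.
set x := a ord_max; set y := b ord_max => h1 h2 /andP[h3 h4].
rewrite -natr1 mulrDl mul1r.
have -> : B * y - A * x = (B - A) * y + A * (y - x) by ring.
have e1 : (B - A) * y <= d%:R * e.
  apply: le_trans IH'; rewrite -[X in _ <= X]mulr1; apply: ler_wpM2l; lra.
have e2 : A * (y - x) <= e.
  have hA1 : A <= 1 by lra.
  apply: le_trans (_ : 1 * (y - x) <= e); last by rewrite mul1r.
  by apply: ler_wpM2r; lra.
lra.
Qed.

End Part3.
Section Part3b.
Set Implicit Arguments. Unset Strict Implicit.
Context {R : realType}.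

Definition cup p d (t : 'I_d -> R) : 'I_d -> R :=
  fun i => (Num.ceil (2%:R ^+ p * t i))%:~R / 2%:R ^+ p.
Definition cdown p d (t : 'I_d -> R) : 'I_d -> R :=
  fun i => (Num.floor (2%:R ^+ p * t i))%:~R / 2%:R ^+ p.

Lemma count_q p d N (x : 'I_N -> 'I_d -> R) t :
  count_box (fun j i => quantize p (x j i)) t = count_box x (cup p t).
Proof.
rewrite /count_box; apply: eq_card => k; rewrite /in_mem /= /in_set /= !asboolb; apply: eq_forallb => i /=.
rewrite /quantize /cup.
have h2 := twoX_gt0 (R:=R) p.
congr andb.
  by rewrite pmulr_lge0 ?invr_gt0 // ler0z floor_ge0 pmulr_rge0.
rewrite ltr_pdivrMr // -ceil_gt_int floor_lt_int (mulrC (t i)).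
by rewrite ltr_pdivlMr // [x k i * _]mulrC.
Qed.

Lemma mul2X_div p (m : int) : (2%:R : R) ^+ p * (m%:~R / 2%:R ^+ p) = m%:~R.
Proof. by rewrite mulrC divfK // twoX_neq0. Qed.

Lemma cup_cup p d (t : 'I_d -> R) : cup p (cup p t) = cup p t.
Proof. by apply/funext => i; rewrite /cup mul2X_div intrKceil. Qed.

Lemma cup_cdown p d (t : 'I_d -> R) : cup p (cdown p t) = cdown p t.
Proof. by apply/funext => i; rewrite /cup /cdown mul2X_div intrKceil. Qed.

Lemma cup_bounds p d (t : 'I_d -> R) i : 0 <= t i <= 1 ->
  [/\ 0 <= t i <= cup p t i, cup p t i <= 1 & cup p t i - t i <= (2%:R ^+ p)^-1].
Proof.
move=> /andP[t0 t1]; have h2 := twoX_gt0 (R:=R) p; rewrite /cup.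
set z := 2%:R ^+ p * t i.
have z0 : 0 <= z by rewrite mulr_ge0 // ltW.
split.
- by rewrite t0 /= ler_pdivlMr // mulrC ceil_ge.
- rewrite ler_pdivrMr // mul1r.
  have hz : Num.ceil z <= (2 ^ p)%N%:Z.
    by rewrite ceil_le_int; change (z <= (2 ^ p)%N%:R); rewrite natrX /z ler_piMr // ltW.
  by rewrite -natrX; change ((Num.ceil z)%:~R <= ((2 ^ p)%N%:Z)%:~R :> R); rewrite ler_int.
- have := ceilB1_lt z; rewrite intrB => h; change (is_true ((Num.ceil z)%:~R - 1 < z)) in h.
  have -> : (Num.ceil z)%:~R / 2%:R ^+ p - t i = ((Num.ceil z)%:~R - z) * (2%:R ^+ p)^-1.
    by rewrite /z; field; rewrite twoX_neq0.
  rewrite -[X in _ <= X]mul1r; apply: ler_wpM2r; first by rewrite invr_ge0 ltW.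
  lra.
Qed.

Lemma cdown_bounds p d (t : 'I_d -> R) i : 0 <= t i <= 1 ->
  [/\ 0 <= cdown p t i <= t i, t i <= 1 & t i - cdown p t i <= (2%:R ^+ p)^-1].
Proof.
move=> /andP[t0 t1]; have h2 := twoX_gt0 (R:=R) p; rewrite /cdown.
set z := 2%:R ^+ p * t i.
have z0 : 0 <= z by rewrite mulr_ge0 // ltW.
have := floor_itv z; rewrite intrD => /andP[f1 f2].
change (is_true (z < (Num.floor z)%:~R + 1)) in f2.
split => //.
- apply/andP; split.
    by rewrite divr_ge0 ?ler0z ?floor_ge0 // ltW.
  by rewrite ler_pdivrMr // mulrC.
- have -> : t i - (Num.floor z)%:~R / 2%:R ^+ p = (z - (Num.floor z)%:~R) * (2%:R ^+ p)^-1.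
    by rewrite /z; field; rewrite twoX_neq0.
  rewrite -[X in _ <= X]mul1r; apply: ler_wpM2r; first by rewrite invr_ge0 ltW.
  lra.
Qed.

Lemma disc_quant p d N (x : 'I_N -> 'I_d -> R) :
  `| star_discrepancy x - star_discrepancy (fun j i => quantize p (x j i)) |
  <= d%:R / 2%:R ^+ p.
Proof.
set qx := fun j i => quantize p (x j i).
have cq : forall t, count_box qx t = count_box x (cup p t) by move=> t; exact: count_q.
apply: sd_close => t Ht.
-
  have Bu := fun i => cup_bounds p (Ht i).
  have Bv := fun i => cdown_bounds p (Ht i).
  have Hu : inbox (cup p t).
    by move=> i; have [/andP[? ?] ? _] := Bu i; apply/andP; split => //; lra.
  have Hv : inbox (cdown p t).
    by move=> i; have [/andP[? ?] ? _] := Bv i; apply/andP; split => //; lra.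
  have e1 := fdisc_le_sd qx Hu; have e2 := fdisc_le_sd qx Hv.
  rewrite /fdisc cq cup_cup ler_norml in e1.
  rewrite /fdisc cq cup_cdown ler_norml in e2.
  have m1 : (count_box x t)%:R / N%:R <= (count_box x (cup p t))%:R / N%:R :> R.
    by apply: cnt_mono => i; have [/andP[? ?] ? _] := Bu i.
  have m2 : (count_box x (cdown p t))%:R / N%:R <= (count_box x t)%:R / N%:R :> R.
    by apply: cnt_mono => i; have [/andP[? ?] ? _] := Bv i.
  have p1 : \prod_(i < d) cup p t i - \prod_(i < d) t i <= d%:R * (2%:R ^+ p)^-1.
    by apply: prod_diff => i; have [? ? ?] := Bu i.
  have p2 : \prod_(i < d) t i - \prod_(i < d) cdown p t i <= d%:R * (2%:R ^+ p)^-1.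
    apply: prod_diff => i; have [? ? ?] := Bv i => //; by case/andP: (Ht i).
  rewrite /fdisc ler_norml; move: e1 e2 m1 m2 p1 p2.
  set A := (count_box x t)%:R / N%:R; set Au := (count_box x (cup p t))%:R / N%:R.
  set Av := (count_box x (cdown p t))%:R / N%:R.
  move=> /andP[a1 a2] /andP[a3 a4] a5 a6 a7 a8.
  apply/andP; split; lra.
-
  have Bu := fun i => cup_bounds p (Ht i).
  have Hu : inbox (cup p t).
    by move=> i; have [/andP[? ?] ? _] := Bu i; apply/andP; split => //; lra.
  have e1 := fdisc_le_sd x Hu.
  have p1 : \prod_(i < d) cup p t i - \prod_(i < d) t i <= d%:R * (2%:R ^+ p)^-1.
    by apply: prod_diff => i; have [? ? ?] := Bu i.
  have p0 : \prod_(i < d) t i <= \prod_(i < d) cup p t i.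
    by apply: ler_prod => i _; have [? ? ?] := Bu i.
  rewrite /fdisc cq.
  apply: le_trans (ler_distD (\prod_(i < d) cup p t i) _ _) _.
  rewrite (ger0_norm (x := \prod_(i < d) cup p t i - _)) ?subr_ge0 //.
  by apply: lerD.
Qed.

End Part3b.
Section Part4.
Context {R : realType} {dT : measure_display} {T : measurableType dT}.

Lemma meas_cyl d N (X : 'I_N -> 'I_d -> T -> R) (B : 'I_N -> 'I_d -> set R) :
  (forall j i, measurable_fun setT (X j i)) -> (forall j i, measurable (B j i)) ->
  measurable [set t | forall j i, B j i (X j i t)].
Proof.
move=> Hm HB.
have -> : [set t | forall j i, B j i (X j i t)] =
  \big[setI/setT]_(ji <- enum {: 'I_N * 'I_d}) (X ji.1 ji.2 @^-1` B ji.1 ji.2).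
  rewrite -bigcap_seq; apply/seteqP; split => t /=.
    by move=> H ji _; exact: H.
  by move=> H j i; apply: (H (j, i)); rewrite /= mem_enum.
apply: bigsetI_measurable => ji _.
by rewrite -[X in measurable X]setTI; apply: Hm.
Qed.

Lemma small_le0 (c e : R) : 0 <= e -> (forall k : nat, c <= e / 2%:R ^+ k) -> c <= 0.
Proof.
move=> e0 H; rewrite leNgt; apply/negP => c0.
pose k := Num.truncn (e / c).
have h1 := H k.
have h2 : (k.+1 <= 2 ^ k)%N by rewrite ltn_expl.
have h3 : e / c < k.+1%:R by exact: truncnS_gt.
have h4 : e / 2%:R ^+ k <= e / k.+1%:R.
  apply: ler_wpM2l => //; rewrite lef_pV2 ?posrE ?ltr0n ?twoX_gt0 //.
  by rewrite -natrX ler_nat.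
have h5 : e / k.+1%:R < c.
  by rewrite ltr_pdivrMr ?ltr0n // mulrC -ltr_pdivrMr.
have := le_lt_trans h1 (le_lt_trans h4 h5); by rewrite ltxx.
Qed.

Lemma meas_sdq d N (X : 'I_N -> 'I_d -> T -> R) k b :
  (forall j i, measurable_fun setT (X j i)) -> (forall j i t, 0 <= X j i t < 1) ->
  measurable [set t | b <= star_discrepancy (fun j i => quantize k (X j i t))].
Proof.
move=> Hm Hx.
pose G := {ffun 'I_N * 'I_d -> 'I_(2 ^ k)}.
pose gp (g : G) := fun (j : 'I_N) (i : 'I_d) => ((g (j, i) : nat)%:R / (2%:R : R) ^+ k).
pose Bk (n : nat) := `[n%:R / (2%:R : R) ^+ k, n.+1%:R / 2%:R ^+ k[%classic.
have -> : [set t | b <= star_discrepancy (fun j i => quantize k (X j i t))] =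
  \big[setU/set0]_(g <- enum G | b <= star_discrepancy (gp g))
     [set t | forall j i, Bk (g (j, i) : nat) (X j i t)].
  rewrite -bigcup_seq_cond; apply/seteqP; split => t /=.
    move=> H.
    pose gt : G := [ffun ji => Ordinal (truncn_lt_pow k _ (Hx ji.1 ji.2 t))].
    have Eq : (fun j i => quantize k (X j i t)) = gp gt.
      apply/funext => j; apply/funext => i.
      rewrite /gp /gt ffunE /= /quantize floor_nat //.
      by rewrite mulr_ge0 ?exprn_ge0 ?ler0n //; case/andP: (Hx j i t).
    exists gt; first by apply/andP; split; [rewrite mem_enum | rewrite -Eq].
    move=> j i; apply/(truncn_dyadic k _ _ (proj1 (andP (Hx j i t)))).
    by rewrite /gt ffunE.
  move=> [g /andP[_ Hb] HE].
  have Eq : (fun j i => quantize k (X j i t)) = gp g.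
    apply/funext => j; apply/funext => i.
    have x0 := proj1 (andP (Hx j i t)).
    rewrite /gp /quantize floor_nat ?mulr_ge0 ?exprn_ge0 ?ler0n //.
    by rewrite (proj2 (truncn_dyadic k _ _ x0) (HE j i)).
  by rewrite /= Eq.
apply: (@bigsetU_measurable _ T G (enum G) (fun g => b <= star_discrepancy (gp g))) => g _.
by apply: (@meas_cyl d N X (fun j i => Bk (g (j, i)))) => // j i; exact: measurable_itv.
Qed.

Lemma meas_sd d N (X : 'I_N -> 'I_d -> T -> R) a :
  (forall j i, measurable_fun setT (X j i)) -> (forall j i t, 0 <= X j i t < 1) ->
  measurable [set t | a <= star_discrepancy (fun j i => X j i t)].
Proof.
move=> Hm Hx.
have -> : [set t | a <= star_discrepancy (fun j i => X j i t)] =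
  \bigcap_k [set t | a - d%:R / 2%:R ^+ k <= star_discrepancy (fun j i => quantize k (X j i t))].
  apply/seteqP; split => t /=.
    move=> H k _ /=; have := disc_quant k (fun j i => X j i t).
    rewrite ler_norml => /andP[h1 h2]; lra.
  move=> H; rewrite -subr_le0; apply: (@small_le0 _ (d%:R *+ 2)) => [|k].
    by rewrite mulrn_wge0 ?ler0n.
  have := H k I; have := disc_quant k (fun j i => X j i t).
  rewrite ler_norml => /andP[h1 h2] /= h3.
  have -> : d%:R *+ 2 / 2%:R ^+ k = d%:R / 2%:R ^+ k + d%:R / 2%:R ^+ k :> R.
    by rewrite mulr2n mulrDl.
  lra.
apply: bigcapT_measurable => k.
exact: meas_sdq.
Qed.

End Part4.
Unset Implicit Arguments. Set Strict Implicit.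

Theorem lemma1 (R : realType) (dT : measure_display) (T : measurableType dT)
  (P : probability T R) (d N p : nat) (X : 'I_N -> 'I_d -> T -> R) :
  (forall j, uniform_on_unit_cube P (X j)) ->
  independent_vectors P X ->
  (forall j i t, 0 <= X j i t < 1) ->
  let U := fun t => binary_word p (fun j i => X j i t) in
  let m := (p * d * N)%N in
  [/\ (* 1. P(U_m) = {X_1^(p), ..., X_N^(p)} *)
      forall t, word_to_points R p d N (U t) = (fun j i => quantize p (X j i t)),
      (* 2. U_m is uniformly distributed in {0,1}^m *)
      (forall t, size (U t) = m) /\
        (forall w : seq bool, size w = m ->
           P [set t | U t = w] = ((2%:R ^+ m)^-1)%:E),
      (* 3. *)
      forall t, `| star_discrepancy (fun j i => X j i t)
                   - star_discrepancy (word_to_points R p d N (U t)) |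
                <= d%:R / 2%:R ^+ p
    & (* 4. *)
      forall C : R, 0 < C ->
        (P [set t | (C * Num.sqrt (d%:R / N%:R)
                      <= star_discrepancy (word_to_points R p d N (U t)))%R]
         <= P [set t | (C * Num.sqrt (d%:R / N%:R) - d%:R / 2%:R ^+ p
                      <= star_discrepancy (fun j i => X j i t))%R])%E ].
Proof.
move=> Hu Hind Hx U m.
have Hm : forall j i, measurable_fun setT (X j i) := fun j i => (proj1 (Hu j)) i.
have P1 : forall t, word_to_points R p d N (U t) = (fun j i => quantize p (X j i t)).
  by move=> t; apply: part1_lem => j i; exact: Hx.
split.
- exact: P1.
- split; first by move=> t; exact: size_binary_word.
  by move=> w Hw; exact: part2_lem.
- by move=> t; rewrite P1; exact: disc_quant.
- move=> C C0.
  have -> : [set t | (C * Num.sqrt (d%:R / N%:R)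
                      <= star_discrepancy (word_to_points R p d N (U t)))%R] =
            [set t | (C * Num.sqrt (d%:R / N%:R)
                      <= star_discrepancy (fun j i => quantize p (X j i t)))%R].
    by apply/seteqP; split => t /=; rewrite P1.
  apply: le_measure.
  + by rewrite inE; exact: meas_sdq.
  + by rewrite inE; exact: meas_sd.
  + move=> t /= H; have := disc_quant p (fun j i => X j i t).
    rewrite ler_norml => /andP[h1 h2]; lra.
Qed.
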